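(* Let $\mathcal{M}$ be a set of $m$ items with $m$ even, and let $v_1,v_2:2^{\mathcal{M}}\to\mathbb{R}$ be arbitrary valuation functions for $n=2$ agents. Let $\sigma_1,\sigma_2$ be independent uniformly random permutations of $\mathcal{M}$. Then, with probability at least $1-\frac{1}{m/2+1}$, an envy-free allocation exists for the renamed valuations $v_1^{\sigma_1},v_2^{\sigma_2}$. Moreover, this is tight up to constants: there exist additive valuation functions $v_1,v_2$ (for every $m\ge 2$) for which, with probability $1/m$, no envy-free allocation exists for $v_1^{\sigma_1},v_2^{\sigma_2}$.
   Context: For a valuation $v$ and a permutation $\sigma:\mathcal{M}\to\mathcal{M}$, the renamed valuation is $v^{\sigma}(S)=v(\sigma^{-1}(S))$, where $\sigma(S)=\{\sigma(g):g\in S\}$. An allocation is a partition $(A_1,A_2)$ of all items of $\mathcal{M}$; it is envy-free if each agent weakly prefers her own bundle to the other agent's bundle. A valuation $v$ is additive if $v(S)=\sum_{g\in S}v(\{g\})$ for all $S$. *)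

(* Defs.v *)
From HB Require Import structures.
From mathcomp Require Import all_boot all_order all_algebra all_fingroup.
From mathcomp Require Import reals.
Set Implicit Arguments. Unset Strict Implicit. Unset Printing Implicit Defensive.
Import Order.TTheory GRing.Theory Num.Theory.
Local Open Scope ring_scope.

Definition valuation (R : realType) (m : nat) := {set 'I_m} -> R.

Definition rename (R : realType) (m : nat) (v : valuation R m)
  (s : {perm 'I_m}) : valuation R m :=
  fun S => v [set (s^-1)%g x | x in S].

Definition envy_free (R : realType) (m : nat) (v1 v2 : valuation R m)
  (A1 A2 : {set 'I_m}) : bool :=
  (v1 A2 <= v1 A1) && (v2 A1 <= v2 A2).

Definition is_partition2 (m : nat) (A1 A2 : {set 'I_m}) : bool :=
  (A1 :&: A2 == set0) && (A1 :|: A2 == setT).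

Definition EF_exists (R : realType) (m : nat) (v1 v2 : valuation R m) : bool :=
  [exists A1 : {set 'I_m}, exists A2 : {set 'I_m},
     is_partition2 A1 A2 && envy_free v1 v2 A1 A2].

Definition additive_val (R : realType) (m : nat) (v : valuation R m) : Prop :=
  forall S : {set 'I_m}, v S = \sum_(g in S) v [set g].

Definition uprob (R : realType) (T : finType) (E : pred T) : R :=
  #|[set x | E x]|%:R / #|T|%:R.

(* sigma1, sigma2 independent uniform permutations = uniform on the pair. *)
Definition prob_EF (R : realType) (m : nat) (v1 v2 : valuation R m) : R :=
  uprob R (fun p : {perm 'I_m} * {perm 'I_m} =>
             EF_exists (rename v1 p.1) (rename v2 p.2)).

(* Main.v *)
From HB Require Import structures.
From mathcomp Require Import all_boot all_order all_algebra all_fingroup.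
From mathcomp Require Import reals.
Require Import Defs.
From mathcomp Require Import all_solvable zify ring lra.
Import Order.TTheory GRing.Theory Num.Theory.
Set Implicit Arguments. Unset Strict Implicit. Unset Printing Implicit Defensive.

Section GroupPart.
Local Open Scope group_scope.

Lemma card_perms (m : nat) : #|{perm 'I_m}| = m`!.
Proof. exact: card_Sn. Qed.

Lemma swap_crit (m : nat) (a : {perm 'I_m}) (C : {set 'I_m}) :
  (forall i, i \in C -> a i \notin C) -> (forall i, i \notin C -> a i \in C) ->
  a @: C = ~: C.
Proof.
move=> h1 h2; apply/setP=> j; rewrite inE; apply/imsetP/idP.
  by case=> i iC ->; exact: h1.
move=> jC; exists ((a^-1) j); last by rewrite permKV.
by apply: contraR jC => /h2; rewrite permKV.
Qed.

Definition rotf (m d : nat) (i : 'I_m) : 'I_m :=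
  Ordinal (ltn_pmod (i + d) (leq_ltn_trans (leq0n i) (ltn_ord i))).

Lemma rotf_inj m d : injective (@rotf m d).
Proof.
move=> i j /(congr1 val) /= /eqP; rewrite eqn_modDr !modn_small //.
by move/eqP/val_inj.
Qed.

Definition rot m d : {perm 'I_m} := perm (@rotf_inj m d).

Lemma rotE m d i : val (rot m d i) = ((i + d) %% m)%N.
Proof. by rewrite permE. Qed.

Lemma rotM m c d : rot m c * rot m d = rot m (c + d).
Proof.
apply/permP=> i; apply/val_inj; rewrite permM !rotE.
by rewrite modnDml addnA.
Qed.

Lemma rot_half m k : m = k.*2 ->
  rot m k @: [set i : 'I_m | (i < k)%N] = ~: [set i : 'I_m | (i < k)%N].
Proof.
move=> hm; apply: swap_crit => i;
  rewrite !inE rotE; have := ltn_ord i; move: (nat_of_ord i) => n nm.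
  move=> ik; rewrite modn_small; first by rewrite -leqNgt leq_addl.
  by rewrite -ltn_subRL; move: ik nm; rewrite hm; lia.
rewrite -leqNgt => ki.
have e : (n + k = (n - k) + m)%N by move: ki nm; rewrite hm; lia.
rewrite e modnDr modn_small; move: ki nm; rewrite hm; lia.
Qed.

Lemma rot_odd m d : ~~ odd m -> odd d -> exists C : {set 'I_m}, rot m d @: C = ~: C.
Proof.
move=> em od; exists [set i : 'I_m | ~~ odd i]; apply: swap_crit => i;
  rewrite !inE rotE odd_mod ?(negbTE em) // oddD od; by case: odd.
Qed.

Definition noswap m (G : {set {perm 'I_m}}) :=
  forall p (C : {set 'I_m}), p \in G -> p @: C != ~: C.

Lemma clique_bound m n (G : {group {perm 'I_m}}) (rho : 'I_n -> {perm 'I_m}) :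
  (forall i j : 'I_n, (i < j)%N ->
     exists C : {set 'I_m}, (rho j * (rho i)^-1) @: C = ~: C) ->
  noswap G -> (#|G| * n <= m`!)%N.
Proof.
move=> hr hG.
have -> : (#|G| * n = #|setX G [set: 'I_n]|)%N by rewrite cardsX cardsT card_ord.
rewrite -card_perms.
rewrite -(@card_in_imset _ _ (fun q => q.1 * rho q.2)); first exact: max_card.
have key : forall g h (i j : 'I_n), g \in G -> h \in G -> (i < j)%N ->
    g * rho i = h * rho j -> False.
  move=> g h i j Gg Gh ij e.
  have eq : rho j * (rho i)^-1 = h^-1 * g.
    by rewrite -[g](mulgK (rho i)) e !mulgA mulVg mul1g.
  have [C hC] := hr i j ij.
  by move: (hG _ C (groupM (groupVr Gh) Gg)); rewrite -eq hC eqxx.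
move=> [g i] [h j] /setXP[Gg _] /setXP[Gh _] /= e.
case: (ltngtP i j) => [ij|ji|/val_inj eij].
- by case: (key g h i j Gg Gh ij e).
- by case: (key h g j i Gh Gg ji (esym e)).
- by subst j; move/mulIg: e => ->.
Qed.

Lemma swap_pt m (a : {perm 'I_m}) (C : {set 'I_m}) i :
  a @: C = ~: C -> (a i \in C) = (i \notin C).
Proof.
move=> h; case iC: (i \in C).
  by have := imset_f a iC; rewrite h inE => /negbTE ->.
apply: contraT => aiC; have : a i \in ~: C by rewrite inE.
by rewrite -h => /imsetP[j jC /perm_inj eij]; rewrite eij jC in iC.
Qed.

Lemma swap_tperm m (a : {perm 'I_m}) (C : {set 'I_m}) c1 c2 :
  a @: C = ~: C -> c1 \in C -> c2 \in C -> (a * tperm c1 c2) @: C = ~: C.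
Proof.
move=> h h1 h2; apply: swap_crit => i iC; rewrite permM.
  have nC : a i \notin C by rewrite swap_pt // iC.
  case: tpermP => [e|e|_ _] //.
  - by rewrite e h1 in nC.
  - by rewrite e h2 in nC.
have yC : a i \in C by rewrite swap_pt.
by case: tpermP => [_|_|_ _].
Qed.

Lemma alt_swap m k : m = k.*2 -> (2 <= k)%N ->
  exists2 x, x \in 'Alt_('I_m) & exists C : {set 'I_m}, x @: C = ~: C.
Proof.
move=> hm k2.
have m0 : (0 < m)%N by rewrite hm; lia.
have m1 : (1 < m)%N by rewrite hm; lia.
set C := [set i : 'I_m | (i < k)%N].
pose c1 : 'I_m := Ordinal m0. pose c2 : 'I_m := Ordinal m1.
have h1 : c1 \in C by rewrite inE /=; lia.
have h2 : c2 \in C by rewrite inE /=; lia.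
have hC := rot_half hm.
case o: (odd_perm (rot m k)).
  exists (rot m k * tperm c1 c2); last by exists C; apply: swap_tperm.
  by rewrite Alt_even odd_permM odd_tperm o.
by exists (rot m k); [rewrite Alt_even o | exists C].
Qed.

Lemma GL m k (G : {group {perm 'I_m}}) :
  m = k.*2 -> noswap G -> (#|G| * k.+1 <= m`!)%N.
Proof.
move=> hm hG.
have em : ~~ odd m by rewrite hm odd_double.
case: (ltnP k 3) => hk.
  apply: (clique_bound (rho := fun i : 'I_k.+1 => rot m i)) hG => i j ij.
  have -> : rot m j * (rot m i)^-1 = rot m (j - i).
    by rewrite -[in rot m j](subnK (ltnW ij)) -rotM mulgK.
  have ji : (j < k.+1)%N := ltn_ord j.
  case: (eqVneq (j - i)%N 1%N) => [->|ne1]; first exact: rot_odd.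
  have [e e2] : (j - i = 2)%N /\ k = 2 by lia.
  rewrite e; exists [set x : 'I_m | (x < 2)%N]; apply: rot_half.
  by rewrite hm e2.
apply: contraT; rewrite -ltnNge => hlt.
have m1 : (1 < #|'I_m|)%N by rewrite card_ord hm; lia.
have cA := card_Alt m1; rewrite card_ord in cA.
set A := ('Alt_('I_m))%G in cA *.
pose H := (G :&: A)%G.
have sHA : H \subset A by exact: subsetIr.
have lag := Lagrange sHA.
have hAG : (#|A| * #|G| <= m`! * #|H|)%N.
  rewrite mul_cardG setIC leq_mul2r; apply/orP; right.
  by rewrite -card_perms max_card.
have hr1 : (#|A : H| * #|G| <= m`!)%N.
  move: hAG; rewrite -lag -mulnA [(m`! * _)%N]mulnC leq_pmul2l // cardG_gt0.
have hr : (#|A : H| <= k)%N.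
  have := leq_ltn_trans hr1 hlt; rewrite mulnC ltn_pmul2l ?cardG_gt0 //.
have simp : simple A by apply: simple_Alt5; rewrite card_ord hm; lia.
case/simpleP: simp => _ simp.
have nK : gcore H A <| A := gcore_normal sHA.
case: (simp [group of gcore H A] nK) => [K1 | KA].
  have nSA : actby_cond A (rcosets H A) 'Rs := actsRs_rcosets H A.
  have ff : [faithful A, on rcosets H A | 'Rs].
    by rewrite /faithful astabRs_rcosets K1 subsetIr.
  have ci := isom_card (faithful_isom nSA ff).
  have hA : (#|A| <= #|A : H|`!)%N.
    rewrite ci -card_perm; apply: subset_leq_card; apply/subsetP => p.
    case/morphimP => a _ Aa -> /=.
    rewrite /perm_on; apply/subsetP => x; rewrite inE actpermE /= /actby Aa andbT.
    by case: (x \in rcosets H A) => //; rewrite eqxx.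
  have : (m`! <= 2 * k`!)%N.
    by rewrite -cA leq_mul2l /= (leq_trans hA) // leq_fact.
  have : ((k.+2)`! <= m`!)%N by apply: leq_fact; lia.
  rewrite !factS; move: (fact_gt0 k); nia.
have sAG : A \subset G.
  by have := gcore_sub H A; rewrite KA => /subset_trans; apply; exact: subsetIl.
have [x Ax [C hC]] := alt_swap hm (ltnW hk).
by move: (hG x C (subsetP sAG x Ax)); rewrite hC eqxx.
Qed.

Lemma mem_imset_perm m (s : {perm 'I_m}) (A : {set 'I_m}) x :
  (x \in s @: A) = (s^-1 x \in A).
Proof.
apply/imsetP/idP => [[y yA ->]|h]; first by rewrite permK.
by exists (s^-1 x) => //; rewrite permKV.
Qed.

Lemma imset_permC m (s : {perm 'I_m}) (A : {set 'I_m}) :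
  s @: (~: A) = ~: (s @: A).
Proof. by apply/setP => x; rewrite !inE !mem_imset_perm inE. Qed.

Lemma imset_permM m (p q : {perm 'I_m}) (A : {set 'I_m}) :
  (p * q) @: A = q @: (p @: A).
Proof. by rewrite -imset_comp; apply: eq_imset => x; rewrite permM. Qed.

Lemma imset_perm1 m (A : {set 'I_m}) : (1 : {perm 'I_m}) @: A = A.
Proof. by rewrite -[RHS]imset_id; apply: eq_imset => x; rewrite perm1. Qed.

End GroupPart.

Local Open Scope ring_scope.

Section Main.
Variable R : realType.

Definition Fv m (v : valuation R m) (A : {set 'I_m}) : bool := v (~: A) <= v A.

Lemma Fv_total m (v : valuation R m) A : Fv v A || Fv v (~: A).
Proof. by rewrite /Fv setCK le_total. Qed.

Lemma EF_iff m (v1 v2 : valuation R m) (s1 s2 : {perm 'I_m}) :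
  EF_exists (rename v1 s1) (rename v2 s2) =
  [exists A : {set 'I_m}, Fv v1 ((s1^-1)%g @: A) && Fv v2 ((s2^-1)%g @: (~: A))].
Proof.
apply/existsP/existsP => [[A1 /existsP[A2 /andP[hp hef]]]|[A /andP[h1 h2]]].
  have eA2 : A2 = ~: A1.
    case/andP: hp => /eqP hI /eqP hU; apply/setP => x; rewrite inE.
    case xA1: (x \in A1) => /=.
      apply/negbTE/negP => xA2.
      have : x \in A1 :&: A2 by rewrite inE xA1 xA2.
      by rewrite hI inE.
    have : x \in A1 :|: A2 by rewrite hU inE.
    by rewrite inE xA1.
  subst A2; exists A1; case/andP: hef => e1 e2.
  by rewrite /Fv -!imset_permC setCK; apply/andP; split.
exists A; apply/existsP; exists (~: A).
rewrite /is_partition2 setICr setUCr !eqxx /=.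
move: h1 h2; rewrite /Fv /envy_free /rename -!imset_permC setCK => -> /=.
by rewrite imset_permC.
Qed.

Lemma bad_struct m (v1 v2 : valuation R m) (s1 s2 : {perm 'I_m}) :
  ~~ EF_exists (rename v1 s1) (rename v2 s2) ->
  (forall A : {set 'I_m}, Fv v2 ((s2^-1)%g @: A) = Fv v1 ((s1^-1)%g @: A)) /\
  (forall X : {set 'I_m}, ~~ (Fv v2 X && Fv v2 (~: X))).
Proof.
rewrite EF_iff negb_exists => /forallP hb.
have e : forall A : {set 'I_m}, Fv v2 ((s2^-1)%g @: A) = Fv v1 ((s1^-1)%g @: A).
  move=> A; case h1: (Fv v1 ((s1^-1)%g @: A)).
    have := hb A; rewrite h1 /= => n2.
    by have := Fv_total v2 ((s2^-1)%g @: A); rewrite -imset_permC (negbTE n2) orbF.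
  have := Fv_total v1 ((s1^-1)%g @: A); rewrite h1 /= -imset_permC => h1c.
  by have := hb (~: A); rewrite h1c setCK /= => /negbTE.
split => // X; apply/negP => /andP[h1 h2].
have eX : (s2^-1)%g @: (s2 @: X) = X by rewrite -imset_permM mulgV imset_perm1.
have := hb (s2 @: X); rewrite -e eX h1 /= imset_permC eX h2.
by [].
Qed.

Definition stabF m (v : valuation R m) : {set {perm 'I_m}} :=
  [set p : {perm 'I_m} | [forall X : {set 'I_m}, Fv v (p @: X) == Fv v X]].

Lemma stabF_group m (v : valuation R m) : group_set (stabF v).
Proof.
apply/group_setP; split.
  by rewrite inE; apply/forallP => X; rewrite imset_perm1.
move=> p q; rewrite !inE => /forallP hp /forallP hq; apply/forallP => X.
by rewrite imset_permM (eqP (hq _)) (eqP (hp _)).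
Qed.

Lemma bad_card m k (v1 v2 : valuation R m) (s1 : {perm 'I_m}) : m = k.*2 ->
  (#|[set s2 | ~~ EF_exists (rename v1 s1) (rename v2 s2)]| * k.+1 <= m`!)%N.
Proof.
move=> hm; set B := [set s2 | _].
case: (set_0Vmem B) => [-> | [a aB]]; first by rewrite cards0.
have [ea sa] : _ /\ _ := bad_struct (eq_ind _ is_true aB _ (in_set _ _)).
pose G := Group (stabF_group v2).
have hG : noswap G.
  move=> p C; rewrite inE => /forallP hp; apply/eqP => pC.
  have := eqP (hp C); rewrite pC => e.
  have := Fv_total v2 C; have := sa C; rewrite e.
  by case: (Fv v2 C).
apply: leq_trans (GL hm hG); rewrite leq_mul2r; apply/orP; right.
rewrite -(@card_in_imset _ _ (fun b => b * a^-1)%g B); last first.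
  by move=> x y _ _; apply: mulIg.
apply: subset_leq_card; apply/subsetP => _ /imsetP[b bB ->].
have [eb _] : _ /\ _ := bad_struct (eq_ind _ is_true bB _ (in_set _ _)).
rewrite inE; apply/forallP => X; apply/eqP.
by rewrite imset_permM ea -eb -imset_permM mulgV imset_perm1.
Qed.

End Main.

Lemma card_split (T1 T2 : finType) (P : pred (T1 * T2)) :
  #|[set x | P x]| = (\sum_(a : T1) #|[set b | P (a, b)]|)%N.
Proof.
rewrite -sum1dep_card.
under [RHS]eq_bigr do rewrite -sum1dep_card.
rewrite pair_big_dep /=; apply: eq_bigl => -[a b] //.
Qed.

Lemma part1 (R : realType) (m : nat) : ~~ odd m ->
  forall v1 v2 : valuation R m,
    1 - 1 / ((m %/ 2)%N.+1)%:R <= prob_EF v1 v2.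
Proof.
move=> em v1 v2.
set k := (m %/ 2)%N.
have hm : m = k.*2 by rewrite /k divn2 even_halfK.
rewrite /prob_EF /uprob.
set E := fun p : {perm 'I_m} * {perm 'I_m} => _.
set S := [set x | E x].
have hb : (#|~: S| * k.+1 <= m`! * m`!)%N.
  have -> : #|~: S| = #|[set x | ~~ E x]| by apply: eq_card => x; rewrite !inE.
  rewrite card_split big_distrl /=.
  apply: (@leq_trans (\sum_(a : {perm 'I_m}) m`!)%N).
    by apply: leq_sum => a _; apply: bad_card.
  by rewrite sum_nat_const card_perms.
have hN := cardsC S.
rewrite card_prod card_perms in hN.
rewrite card_prod card_perms -hN.
set g := #|S| in hN *; set nb := #|~: S| in hb hN *.
have K0 : (0 : R) < (k.+1)%:R by rewrite ltr0n.
have N0 : (0 : R) < (g + nb)%:R by rewrite hN ltr0n muln_gt0 fact_gt0.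
have hb' : nb%:R * (k.+1)%:R <= (g + nb)%:R :> R by rewrite -natrM ler_nat hN.
rewrite ler_pdivlMr // natrD.
have : nb%:R <= (g%:R + nb%:R) / (k.+1)%:R :> R by rewrite ler_pdivlMr // -natrD.
have -> : (1 - 1 / (k.+1)%:R) * (g%:R + nb%:R) =
  (g%:R + nb%:R) - (g%:R + nb%:R) / (k.+1)%:R :> R.
  by field; rewrite addrC natr1 pnatr_eq0.
set y := (_ / _); move=> h; lra.
Qed.

Lemma fiber_card m (g0 x : 'I_m) :
  #|[set s : {perm 'I_m} | s g0 == x]| = #|[set s : {perm 'I_m} | s g0 == g0]|.
Proof.
have -> : [set s : {perm 'I_m} | s g0 == x] =
    (fun s => s * tperm g0 x)%g @: [set s : {perm 'I_m} | s g0 == g0].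
  apply/setP => s; rewrite inE; apply/eqP/imsetP => [h|[t]].
    exists (s * tperm g0 x)%g; last by rewrite -mulgA tperm2 mulg1.
    by rewrite inE permM h tpermR.
  by rewrite inE => /eqP ht ->; rewrite permM ht tpermL.
by apply: card_imset; apply: mulIg.
Qed.

Lemma fiber_sum m (g0 : 'I_m) :
  (m * #|[set s : {perm 'I_m} | s g0 == g0]| = m`!)%N.
Proof.
have -> : (m * #|[set s : {perm 'I_m} | s g0 == g0]| =
    \sum_(x : 'I_m) #|[set s : {perm 'I_m} | s g0 == x]|)%N.
  rewrite (eq_bigr (fun _ => #|[set s : {perm 'I_m} | s g0 == g0]|)).
    by rewrite sum_nat_const card_ord.
  by move=> x _; rewrite fiber_card.
rewrite -card_perms -sum1_card (partition_big (fun s : {perm 'I_m} => s g0) predT) //=.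
by apply: eq_bigr => x _; rewrite -sum1dep_card.
Qed.

Lemma part2 (R : realType) (m : nat) : (2 <= m)%N ->
  exists v1 v2 : valuation R m,
    [/\ additive_val v1, additive_val v2 & 1 - prob_EF v1 v2 = 1 / m%:R].
Proof.
move=> m2.
have m0 : (0 < m)%N by lia.
pose g0 : 'I_m := Ordinal m0.
pose v : valuation R m := fun S => (g0 \in S)%:R.
have addv : additive_val v.
  move=> S; rewrite /v; case g0S: (g0 \in S).
    rewrite (bigD1 g0) //= in_set1 eqxx big1 ?addr0 // => g /andP[_ ne].
    by rewrite in_set1 eq_sym (negbTE ne).
  rewrite big1 // => g gS; rewrite in_set1; case: eqP => // e.
  by rewrite e gS in g0S.
exists v, v; split => //.
have FvE : forall X, Fv v X = (g0 \in X).
  by move=> X; rewrite /Fv /v inE; case: (g0 \in X); rewrite ?ler01 ?ler10.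
have hE : forall s1 s2 : {perm 'I_m},
    EF_exists (rename v s1) (rename v s2) = (s1 g0 != s2 g0).
  move=> s1 s2; rewrite EF_iff.
  apply/existsP/idP => [[A]|ne].
    rewrite !FvE !mem_imset_perm !invgK inE => /andP[h1 h2].
    by apply: contraNneq h2 => <-.
  exists [set s1 g0]; rewrite !FvE !mem_imset_perm !invgK !inE eqxx /=.
  by rewrite eq_sym.
rewrite /prob_EF /uprob.
set S := [set x | _].
have hN := cardsC S.
rewrite card_prod card_perms in hN.
have hnb : #|~: S| = (m`! * #|[set s : {perm 'I_m} | s g0 == g0]|)%N.
  have -> : #|~: S| = #|[set x : {perm 'I_m} * {perm 'I_m} | x.1 g0 == x.2 g0]|.
    by apply: eq_card => x; rewrite !inE hE negbK.
  rewrite card_split (eq_bigr (fun _ => #|[set s : {perm 'I_m} | s g0 == g0]|)).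
    by rewrite sum_nat_const card_perms.
  move=> a _; rewrite -(fiber_card g0 (a g0)).
  by apply: eq_card => s; rewrite !inE eq_sym.
have hf := fiber_sum g0.
rewrite card_prod card_perms -hN.
set c := #|[set s : {perm 'I_m} | s g0 == g0]| in hnb hf.
set g := #|S| in hN *.
have eN : (g + #|~: S|)%:R = (m`! * m`!)%:R :> R by rewrite hN.
have ef : (m * c)%:R = m`!%:R :> R by rewrite hf.
rewrite hnb natrM in eN; rewrite natrM in ef.
have F0 : m`!%:R != 0 :> R by rewrite pnatr_eq0 -lt0n fact_gt0.
have M0 : m%:R != 0 :> R by rewrite pnatr_eq0 -lt0n.
rewrite hnb natrD natrM.
set F := m`!%:R in eN ef F0 *.
have eg : g%:R = F * F - F * c%:R by rewrite -eN natrD natrM addrK.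
rewrite eg subrK -ef.
have C0 : c%:R != 0 :> R.
  by apply: contra F0 => /eqP c0; rewrite -ef c0 mulr0.
by field; rewrite ?M0 ?C0.
Qed.

Theorem theorem3p5 (R : realType) :
  (forall (m : nat), ~~ odd m ->
     forall v1 v2 : valuation R m,
       1 - 1 / ((m %/ 2)%N.+1)%:R <= prob_EF v1 v2) /\
  (forall (m : nat), (2 <= m)%N ->
     exists v1 v2 : valuation R m,
       [/\ additive_val v1, additive_val v2 & 1 - prob_EF v1 v2 = 1 / m%:R]).
Proof. split; [exact: part1 | exact: part2]. Qed.
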